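(* There exists an Elgot monad $\mathbb{T}$ on $\mathbf{Set}$ whose Kleisli category is enriched over bounded join-semilattices and strict join-preserving maps and which satisfies $(\eta\circ\mathrm{inl}\lor\eta\circ\mathrm{inr})^\dagger=\eta$, but which fails Strong Uniformity (and hence is not a Kleene monad).
   Context: Elgot monad: a monad $(T,\eta,(\cdot)^\sharp)$ with Kleisli composition $g\cdot f=g^\sharp\circ f$, equipped with $(\cdot)^\dagger:\mathbf{Set}(X,T(Y+X))\to\mathbf{Set}(X,TY)$ satisfying Fixpoint $[\eta,f^\dagger]\cdot f=f^\dagger$; Naturality $g\cdot f^\dagger=([T\mathrm{inl}\circ g,\eta\circ\mathrm{inr}]\cdot f)^\dagger$ for $g:Y\to TZ$; Codiagonal $f^{\dagger\dagger}=([\eta,\eta\circ\mathrm{inr}]\cdot f)^\dagger$ for $f:X\to T((Y+X)+X)$; Uniformity: for functions $h:X\to Z$, $g:Z\to T(Y+Z)$, $f:X\to T(Y+X)$, if $g\circ h=T(\mathrm{id}+h)\circ f$ then $g^\dagger\circ h=f^\dagger$. $\delta=(\eta\circ\mathrm{inr})^\dagger$. Strong Uniformity: for all $h:X\to TZ$, $g:Z\to T(Y+Z)$, $f:X\to T(Y+X)$: if $\delta\cdot h=\delta$ and $g\cdot h=[\eta\circ\mathrm{inl},\eta\circ\mathrm{inr}\cdot h]\cdot f$, then $g^\dagger\cdot h=f^\dagger$. Enrichment over bounded join-semilattices and strict join-preserving maps: each $\mathbf{Set}(X,TY)$ is a join-semilattice with least element, and Kleisli composition preserves binary joins and the least element in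 each argument. A Kleene monad is a monad whose Kleisli category is so enriched and carries an operator $(\cdot)^\ast$ on endo-hom-sets with $g\cdot f^\ast$ the least prefixpoint of $x\mapsto g\lor x\cdot f$ and $f^\ast\cdot h$ the least prefixpoint of $x\mapsto h\lor f\cdot x$. *)

(* Defs.v *)
(* Set is modelled by Rocq's Type; equality of morphisms is
   Leibniz equality of functions. *)
Set Implicit Arguments.

Section Defs.
Variable T : Type -> Type.
Variable eta : forall X : Type, X -> T X.
Variable bind : forall X Y : Type, (X -> T Y) -> T X -> T Y.

Definition copair {A B C : Type} (f : A -> C) (g : B -> C) : A + B -> C :=
  fun s => match s with inl a => f a | inr b => g b end.

Definition kcomp {X Y Z : Type} (g : Y -> T Z) (f : X -> T Y) : X -> T Z :=
  fun x => bind g (f x).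

Definition Tmap {X Y : Type} (f : X -> Y) : T X -> T Y :=
  bind (fun x => eta (f x)).

Definition sum_map {A B C D : Type} (f : A -> C) (g : B -> D) : A + B -> C + D :=
  copair (fun a => inl (f a)) (fun b => inr (g b)).

Definition is_monad : Prop :=
  (forall X : Type, bind (@eta X) = fun t => t) /\
  (forall (X Y : Type) (f : X -> T Y), (fun x => bind f (eta x)) = f) /\
  (forall (X Y Z : Type) (f : X -> T Y) (g : Y -> T Z),
      (fun t => bind g (bind f t)) = bind (kcomp g f)).

Variable dagger : forall X Y : Type, (X -> T (Y + X)) -> X -> T Y.

Definition delta (X Y : Type) : X -> T Y :=
  dagger (fun x : X => eta (@inr Y X x)).

Definition fixpoint_law : Prop :=
  forall (X Y : Type) (f : X -> T (Y + X)),
    kcomp (copair (@eta Y) (dagger f)) f = dagger f.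

Definition naturality_law : Prop :=
  forall (X Y Z : Type) (g : Y -> T Z) (f : X -> T (Y + X)),
    kcomp g (dagger f) =
    dagger (kcomp (copair (fun y => Tmap (@inl Z X) (g y))
                          (fun x => eta (@inr Z X x))) f).

Definition codiagonal_law : Prop :=
  forall (X Y : Type) (f : X -> T ((Y + X) + X)),
    dagger (dagger f) =
    dagger (kcomp (copair (@eta (Y + X)) (fun x => eta (@inr Y X x))) f).

Definition uniformity_law : Prop :=
  forall (X Y Z : Type) (h : X -> Z) (g : Z -> T (Y + Z)) (f : X -> T (Y + X)),
    (fun x => g (h x)) = (fun x => Tmap (sum_map (fun y : Y => y) h) (f x)) ->
    (fun x => dagger g (h x)) = dagger f.

Definition is_elgot_monad : Prop :=
  is_monad /\ fixpoint_law /\ naturality_law /\ codiagonal_law /\ uniformity_law.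

Definition strong_uniformity : Prop :=
  forall (X Y Z : Type) (h : X -> T Z) (g : Z -> T (Y + Z)) (f : X -> T (Y + X)),
    kcomp (@delta Z Y) h = @delta X Y ->
    kcomp g h = kcomp (copair (fun y => eta (@inl Y Z y))
                              (kcomp (fun z => eta (@inr Y Z z)) h)) f ->
    kcomp (dagger g) h = dagger f.

Variable join : forall X Y : Type, (X -> T Y) -> (X -> T Y) -> (X -> T Y).
Variable bot : forall X Y : Type, X -> T Y.

Definition is_enriched : Prop :=
  (forall (X Y : Type) (f g h : X -> T Y), join f (join g h) = join (join f g) h) /\
  (forall (X Y : Type) (f g : X -> T Y), join f g = join g f) /\
  (forall (X Y : Type) (f : X -> T Y), join f f = f) /\
  (forall (X Y : Type) (f : X -> T Y), join (@bot X Y) f = f) /\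
  (forall (X Y Z : Type) (g : Y -> T Z) (f1 f2 : X -> T Y),
      kcomp g (join f1 f2) = join (kcomp g f1) (kcomp g f2)) /\
  (forall (X Y Z : Type) (g1 g2 : Y -> T Z) (f : X -> T Y),
      kcomp (join g1 g2) f = join (kcomp g1 f) (kcomp g2 f)) /\
  (forall (X Y Z : Type) (g : Y -> T Z), kcomp g (@bot X Y) = @bot X Z) /\
  (forall (X Y Z : Type) (f : X -> T Y), kcomp (@bot Y Z) f = @bot X Z).

End Defs.

(* Main.v *)
Require Import Defs.
From Stdlib Require Import Setoid FunctionalExtensionality PropExtensionality ProofIrrelevance Arith Lia.

(* Counterexample: the filter monad (filters incl. the improper one),
   join = intersection, bot = improper filter, dagger = greatest fixpoint. *)

Record filt (X : Type) : Type := mkF {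
  fp : (X -> Prop) -> Prop;
  ftop : fp (fun _ => True);
  fmeet : forall V W : X -> Prop, fp (fun x => V x /\ W x) <-> (fp V /\ fp W) }.
Arguments mkF {X}. Arguments fp {X}. Arguments ftop {X}. Arguments fmeet {X}.

Lemma filt_eq {X} (F G : filt X) : (forall V, fp F V <-> fp G V) -> F = G.
Proof.
  destruct F as [p1 t1 m1], G as [p2 t2 m2]; simpl; intro H.
  assert (p1 = p2) by (extensionality V; apply propositional_extensionality; apply H).
  subst p2. f_equal; apply proof_irrelevance.
Qed.

Lemma fmono {X} (F : filt X) (V W : X -> Prop) :
  (forall x, V x -> W x) -> fp F V -> fp F W.
Proof.
  intros H HV.
  assert (E : (fun x => V x /\ W x) = V).
  { extensionality x; apply propositional_extensionality; split; [tauto | intro; split; auto]. }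
  pose proof (proj1 (fmeet F V W)) as M. rewrite E in M. exact (proj2 (M HV)).
Qed.

Lemma fext {X} (F : filt X) V W : (forall x, V x <-> W x) -> (fp F V <-> fp F W).
Proof. intro H; split; apply fmono; firstorder. Qed.

Definition feta (X : Type) (x : X) : filt X :=
  mkF (fun V => V x) I (fun V W => iff_refl _).

Definition fbind (X Y : Type) (f : X -> filt Y) (F : filt X) : filt Y.
Proof.
  refine (mkF (fun V => fp F (fun x => fp (f x) V)) _ _).
  - apply (fmono F (fun _ => True)); [intros x _; apply ftop | apply ftop].
  - intros V W. rewrite <- (fmeet F). apply fext. intro x. apply fmeet.
Defined.

Definition fjoin (X Y : Type) (f g : X -> filt Y) (x : X) : filt Y.
Proof.
  refine (mkF (fun V => fp (f x) V /\ fp (g x) V) (conj (ftop _) (ftop _)) _).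
  intros V W. rewrite (fmeet (f x)), (fmeet (g x)). tauto.
Defined.

Definition fbot (X Y : Type) (x : X) : filt Y :=
  mkF (fun _ => True) I (fun V W => conj (fun _ => conj I I) (fun _ => I)).

Definition nu {X} (P : (X -> Prop) -> X -> Prop) (x : X) : Prop :=
  exists S : X -> Prop, S x /\ forall z, S z -> P S z.

Definition monoP {X} (P : (X -> Prop) -> X -> Prop) :=
  forall S S' : X -> Prop, (forall z, S z -> S' z) -> forall z, P S z -> P S' z.

Lemma nu_unfold {X} (P : (X -> Prop) -> X -> Prop) x : monoP P -> nu P x -> P (nu P) x.
Proof.
  intros Hm [S [Sx H]]. apply (Hm S); [intros z Sz; exists S; auto | auto].
Qed.

Lemma nu_fold {X} (P : (X -> Prop) -> X -> Prop) x : monoP P -> P (nu P) x -> nu P x.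
Proof.
  intros Hm Hx. exists (fun z => P (nu P) z); split; auto.
  intros z Hz. apply (Hm (nu P)); [intros w Hw; apply nu_unfold; auto | exact Hz].
Qed.

Lemma nu_iff {X} (P Q : (X -> Prop) -> X -> Prop) x :
  (forall S z, P S z <-> Q S z) -> (nu P x <-> nu Q x).
Proof.
  intro H; split; intros [S [Sx K]]; exists S; split; auto; intros z Hz; apply H; auto.
Qed.

Definition dpred {X Y} (f : X -> filt (Y + X)) (V : Y -> Prop) :
  (X -> Prop) -> X -> Prop := fun S z => fp (f z) (copair V S).

Lemma dpred_mono {X Y} (f : X -> filt (Y + X)) V : monoP (dpred f V).
Proof.
  intros S S' H z. unfold dpred. apply fmono. intros [y|x']; simpl; auto.
Qed.

Definition fdag (X Y : Type) (f : X -> filt (Y + X)) (x : X) : filt Y.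
Proof.
  refine (mkF (fun V => nu (dpred f V) x) _ _).
  - exists (fun _ => True). split; [exact I|]. intros z _. unfold dpred.
    apply (fmono _ (fun _ => True)); [intros [y|x'] _; exact I | apply ftop].
  - intros V W; split.
    + intros [S [Sx K]]; split; exists S; split; auto; intros z Hz;
        specialize (K z Hz); unfold dpred in *; revert K; apply fmono;
        intros [y|x']; simpl; tauto.
    + intros [[S1 [H1 K1]] [S2 [H2 K2]]]. exists (fun z => S1 z /\ S2 z).
      split; [auto|]. intros z [a b]. unfold dpred.
      apply (fmono _ (fun s => copair V S1 s /\ copair W S2 s)).
      * intros [y|x']; simpl; tauto.
      * apply fmeet. split; [apply K1|apply K2]; auto.
Defined.

Lemma L_monad : is_monad filt feta fbind.
Proof.
  unfold is_monad; split; [|split].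
  - intro X. extensionality t. apply filt_eq. intro V. apply iff_refl.
  - intros X Y f. extensionality x. apply filt_eq; intro V; apply iff_refl.
  - intros. extensionality t. apply filt_eq. intros V. apply iff_refl.
Qed.

Lemma L_fix : fixpoint_law filt feta fbind fdag.
Proof.
  intros X Y f. extensionality x. apply filt_eq. intro V.
  change (fp (f x) (fun s => fp (copair (feta Y) (fdag X Y f) s) V) <-> nu (dpred f V) x).
  transitivity (fp (f x) (copair V (nu (dpred f V)))).

  - apply fext. intros [y|x']; split; intro H; exact H.
  - split; intro H.
    + apply nu_fold; [apply dpred_mono | exact H].
    + exact (nu_unfold _ _ (dpred_mono f V) H).
Qed.

Lemma L_nat : naturality_law filt feta fbind fdag.
Proof.
  intros X Y Z g f. extensionality x. apply filt_eq. intro V.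
  apply nu_iff. intros S z. unfold dpred. cbn. apply fext.
  intros [y|x']; split; intro H; exact H.
Qed.

Lemma L_codiag : codiagonal_law filt feta fbind fdag.
Proof.
  intros X Y f. extensionality x. apply filt_eq. intro V.
  set (Q := fun (S : X -> Prop) w => fp (f w) (copair (copair V S) S)).
  assert (Qm : monoP Q).
  { intros S S' H z. unfold Q. apply fmono. intros [[y|x1]|x2]; simpl; auto. }
  transitivity (nu Q x).
  2: { apply nu_iff. intros S z. unfold dpred, Q. cbn. apply fext.
       intros [[y|x1]|x2]; split; intro H; exact H. }
  change (nu (dpred (fdag X (Y + X) f) V) x <-> nu Q x).
  split.
  - intro HL. set (L := nu (dpred (fdag X (Y + X) f) V)) in *.
    exists L. split; [exact HL|]. intros z Hz.
    pose proof (nu_unfold _ _ (dpred_mono (fdag X (Y + X) f) V) Hz) as H1.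
    change (nu (dpred f (copair V L)) z) in H1.
    pose proof (nu_unfold _ _ (dpred_mono f (copair V L)) H1) as H2.
    unfold dpred in H2. unfold Q. revert H2. apply fmono.
    intros [[y|x1]|x2]; simpl; auto.
    intro Hn. apply nu_fold; [apply dpred_mono | exact Hn].
  - intro HA. exists (nu Q). split; [exact HA|]. intros z Hz.
    change (nu (dpred f (copair V (nu Q))) z).
    exists (nu Q). split; [exact Hz|]. intros w Hw.
    exact (nu_unfold _ _ Qm Hw).
Qed.

Lemma L_unif : uniformity_law filt feta fbind fdag.
Proof.
  intros X Y Z h g f Hp. extensionality x. apply filt_eq. intro V.
  assert (Hx : forall x W, fp (g (h x)) W <->
                 fp (f x) (fun s => W (sum_map (fun y => y) h s))).
  { intros x0 W. pose proof (equal_f Hp x0) as E. simpl in E. rewrite E. apply iff_refl. }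
  change (nu (dpred g V) (h x) <-> nu (dpred f V) x).
  split.
  - intro H. exists (fun x => nu (dpred g V) (h x)). split; [exact H|].
    intros x' Hx'. pose proof (nu_unfold _ _ (dpred_mono g V) Hx') as H1.
    unfold dpred in *. apply Hx in H1. revert H1. apply fmono.
    intros [y|x2]; simpl; auto.
  - intro H. exists (fun z => exists x, z = h x /\ nu (dpred f V) x).
    split; [eauto|]. intros z [x0 [-> Hx0]].
    pose proof (nu_unfold _ _ (dpred_mono f V) Hx0) as H1.
    unfold dpred in *. apply Hx. revert H1. apply fmono.
    intros [y|x2]; simpl; eauto.
Qed.

Lemma L_enr : is_enriched filt fbind fjoin fbot.
Proof.
  unfold is_enriched; repeat split; intros.
  all: try (extensionality x; apply filt_eq; intro V; simpl; tauto).
  - extensionality x; apply filt_eq; intro V. exact (fmeet (f x) _ _).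
  - extensionality x; apply filt_eq; intro V. simpl. split; auto. intros _. apply ftop.
Qed.

Definition frechet : filt nat.
Proof.
  refine (mkF (fun W => exists N, forall n, N <= n -> W n) (ex_intro _ 0 (fun _ _ => I)) _).
  intros V W; split.
  - intros [N H]; split; exists N; intros n Hn; apply H; auto.
  - intros [[N1 H1] [N2 H2]]. exists (N1 + N2). intros n Hn.
    split; [apply H1 | apply H2]; lia.
Defined.

Definition gcex (n : nat) : filt (unit + nat) :=
  match n with 0 => feta _ (inl tt) | S m => feta _ (inr m) end.

Lemma L_notSU : ~ strong_uniformity filt feta fbind fdag.
Proof.
  intro SU.
  specialize (SU unit unit nat (fun _ => frechet) gcex (fun _ => feta _ (inr tt))).
  assert (SU' : kcomp filt fbind (fdag nat unit gcex) (fun _ : unit => frechet) =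
      fdag unit unit (fun _ : unit => feta (unit + unit) (inr tt))).
  { apply SU.
  { extensionality x. apply filt_eq. intro V.
    assert (T1 : forall X (z : X), nu (dpred (fun x => feta (unit + X) (inr x)) V) z).
    { intros X z. exists (fun _ => True). split; auto. }
    split; intros _.
    - apply T1.
    - apply (fmono frechet (fun _ => True)); [intros; apply T1 | apply ftop]. }
  { extensionality x. apply filt_eq. intro W. simpl. split.
    - intros [N H]. exists N. intros n Hn. apply (H (S n)). lia.
    - intros [N H]. exists (S N). intros [|n] Hn; [lia|]. simpl. apply H. lia. } }
  clear SU; rename SU' into SU.
  pose proof (f_equal (fun F => fp (F tt) (fun _ => False)) SU) as E.
  simpl in E.
  assert (Hr : nu (dpred (fun _ : unit => feta (unit + unit) (inr tt)) (fun _ => False)) tt).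
  { exists (fun _ => True). split; auto. }
  assert (Hl : forall n, ~ nu (dpred gcex (fun _ => False)) n).
  { induction n; intro H; pose proof (nu_unfold _ _ (dpred_mono gcex _) H) as H1;
      unfold dpred in H1; simpl in H1; auto. }
  change (frechet.(fp) (fun n => nu (dpred gcex (fun _ => False)) n) =
          nu (dpred (fun _ : unit => feta (unit + unit) (inr tt)) (fun _ => False)) tt) in E.
  rewrite <- E in Hr. destruct Hr as [N HN]. exact (Hl N (HN N (le_n N))).
Qed.

Theorem mainTheorem9 :
  exists (T : Type -> Type) (eta : forall X : Type, X -> T X)
         (bind : forall X Y : Type, (X -> T Y) -> T X -> T Y)
         (dagger : forall X Y : Type, (X -> T (Y + X)%type) -> X -> T Y)
         (join : forall X Y : Type, (X -> T Y) -> (X -> T Y) -> (X -> T Y))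
         (bot : forall X Y : Type, X -> T Y),
    is_elgot_monad T eta bind dagger /\
    is_enriched T bind join bot /\
    (forall X : Type,
        dagger X X (join X (X + X)%type
                         (fun x : X => eta (X + X)%type (inl x))
                         (fun x : X => eta (X + X)%type (inr x))) = eta X) /\
    ~ strong_uniformity T eta bind dagger.
Proof.
  exists filt, feta, fbind, fdag, fjoin, fbot.
  split; [|split; [|split]].
  - unfold is_elgot_monad.
    split; [exact L_monad|split; [exact L_fix|split; [exact L_nat|split; [exact L_codiag|exact L_unif]]]].
  - exact L_enr.
  - intro X. extensionality x. apply filt_eq. intro V.
    change (nu (dpred (fjoin X (X + X) (fun x => feta (X + X) (inl x)) (fun x => feta (X + X) (inr x))) V) x <-> V x).
    split.
    + intros [S [Sx H]]. exact (proj1 (H x Sx)).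
    + intro Hv. exists V. split; auto. intros z Hz. split; exact Hz.
  - exact L_notSU.
Qed.
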